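(* Let $\lambda_{\max}>1$ and let $F:[0,\lambda_{\max}]\to\mathbb{R}_+$ be continuously differentiable with $F(0)=0$, such that $F(x)<F^\star$ for all $x\in[0,1)$ and $F'(1)>0$. Suppose $x_1^\star\in(1,\lambda_{\max}]$, $x_2^\star\in[0,1)$, $p^\star\in(0,1)$ are such that the measure $\alpha(\{x_1^\star\})=p^\star$, $\alpha(\{x_2^\star\})=1-p^\star$ is an optimal solution of the problem defining $F^\star$. Let $\varepsilon>0$. Then for every stable control policy $\lambda$ with $R(\lambda)\le\varepsilon$, $$\mathbb{E}_\pi[\lambda(\bar q)]=1-\pi_0\ge 1-\frac{x_1^\star-x_2^\star}{F(x_1^\star)-F(x_2^\star)}\,\varepsilon.$$
   Context: A control policy is a function $\lambda:\mathbb{Z}_+\to[0,\lambda_{\max}]$; it defines a continuous-time birth–death chain on $\mathbb{Z}_+$ with rate $\lambda(q)$ from $q$ to $q+1$ and rate $1$ from $q$ to $q-1$ ($q\ge1$). Let $\mathcal S$ be the set of states reachable from $0$. The policy is stable if $\sum_{i\in\mathcal S}\prod_{q=0}^{i}\lambda(q)<\infty$ (positive recurrence on $\mathcal S$); then $\pi$ is its stationary distribution (with $\pi_0$ the mass at state $0$) and $\bar q\sim\pi$. $F^\star=\sup\{\mathbb{E}_\alpha[F(X)]:\alpha$ a probability measure on $[0,\lambda_{\max}]$, $X\sim\alpha$, $\mathbb{E}_\alpha[X]\le1\}$; regret $R(\lambda)=F^\star-\mathbb{E}_\pi[F(\lambda(\bar q))]$. *)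

(* Defs.v *)
From HB Require Import structures.
From mathcomp Require Import all_boot all_order all_algebra.
From mathcomp Require Import all_classical all_reals all_analysis.
From Stdlib Require Import Relations.

Set Implicit Arguments.
Unset Strict Implicit.
Unset Printing Implicit Defensive.

Import Order.TTheory GRing.Theory Num.Theory.
Import numFieldNormedType.Exports.
Local Open Scope classical_set_scope.
Local Open Scope ring_scope.

Section Queue.
Variable R : realType.

Definition I0 (lmax : R) : set R := `[0, lmax]%classic.

(* alpha is a probability measure on [0, lmax] (encoded as a Borel probability
   measure on R giving full mass to [0, lmax]) with E_alpha[X] <= 1. *)
Definition feasible (lmax : R) (alpha : probability R R) : Prop :=
  alpha (I0 lmax) = 1%E /\
  (\int[alpha]_(x in I0 lmax) x%:E <= 1%:E)%E.

Definition Fstar (lmax : R) (F : R -> R) : R :=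
  sup [set r : R | exists alpha : probability R R,
         feasible lmax alpha /\
         (\int[alpha]_(x in I0 lmax) (F x)%:E)%E = r%:E].

Definition optimal (lmax : R) (F : R -> R) (alpha : probability R R) : Prop :=
  feasible lmax alpha /\
  (\int[alpha]_(x in I0 lmax) (F x)%:E)%E = (Fstar lmax F)%:E.

Definition policy (lmax : R) (lam : nat -> R) : Prop :=
  forall q, 0 <= lam q <= lmax.

Definition rate (lam : nat -> R) (i j : nat) : R :=
  if j == i.+1 then lam i else if i == j.+1 then 1 else 0.

Definition step (lam : nat -> R) (i j : nat) : Prop := 0 < rate lam i j.

Definition reachable (lam : nat -> R) (i : nat) : Prop :=
  clos_refl_trans nat (step lam) 0%N i.

Definition stable (lam : nat -> R) : Prop :=
  (\sum_(i <oo | `[< reachable lam i >]) (\prod_(q < i.+1) lam q)%:E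
   < +oo)%E.

(* pi is the stationary distribution of the chain on S:
   a probability distribution on S satisfying the global balance equations
   pi Q = 0 (Q the generator), written out for each state j of S. *)
Definition stationary (lam : nat -> R) (pi : nat -> R) : Prop :=
  (forall i, 0 <= pi i) /\
  (forall i, ~ reachable lam i -> pi i = 0) /\
  (series pi @ \oo --> (1 : R)) /\
  (forall j, reachable lam j ->
     pi j * (lam j + (if (0 < j)%N then 1 else 0)) =
     (if (0 < j)%N then pi j.-1 * rate lam j.-1 j else 0)
       + pi j.+1 * rate lam j.+1 j).

Definition Epi (lam : nat -> R) (pi : nat -> R) (g : R -> R) : R :=
  limn (series (fun i => pi i * g (lam i))).

Definition regret (lmax : R) (F : R -> R) (lam pi : nat -> R) : R :=
  Fstar lmax F - Epi lam pi F.

End Queue.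

(* Main.v *)
Require Import Defs.
From HB Require Import structures.
From mathcomp Require Import all_boot all_order all_algebra.
From mathcomp Require Import all_classical all_reals all_analysis.
From Stdlib Require Import Relations.
From mathcomp Require Import measurable_realfun.
From mathcomp Require Import ring lra.

Import Order.TTheory GRing.Theory Num.Theory.
Import numFieldNormedType.Exports.
Local Open Scope classical_set_scope.
Local Open Scope ring_scope.

Section Helpers.
Local Set Implicit Arguments.
Local Unset Strict Implicit.
Section TwoPoint.
Variables (R : realType) (a b s : R) (s0 : 0 <= s) (s1 : s <= 1).

Let s0' : 0 <= 1 - s. Proof. by rewrite subr_ge0. Qed.

Definition tpm : set R -> \bar R :=
  measure_add (mscale (NngNum s0) (@dirac _ R a R))
              (mscale (NngNum s0') (@dirac _ R b R)).

HB.instance Definition _ := Measure.on tpm.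

Let tpm_setT : tpm setT = 1%E.
Proof.
rewrite /tpm measure_addE; change (s%:E * \d_a setT + (1-s)%:E * \d_b setT = 1)%E; rewrite !diracT.
by rewrite !mule1 -EFinD subrKC.
Qed.

HB.instance Definition _ := @Measure_isProbability.Build _ _ R tpm tpm_setT.

Lemma tpm_int (D : set R) (f : R -> \bar R) : measurable D ->
  measurable_fun D f -> (forall x, D x -> (0 <= f x)%E) -> D a -> D b ->
  (\int[tpm]_(x in D) f x = s%:E * f a + (1 - s)%:E * f b)%E.
Proof.
move=> mD mf f0 Da Db.
rewrite /tpm ge0_integral_measure_add //.
rewrite !ge0_integral_mscale // !integral_dirac //=.
by rewrite !diracE !mem_set // !mul1e.
Qed.

Lemma tpm_D1 (D : set R) : D a -> D b -> tpm D = 1%E.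
Proof.
move=> Da Db; rewrite /tpm measure_addE.
change (s%:E * \d_a D + (1-s)%:E * \d_b D = 1)%E.
by rewrite !diracE !mem_set // !mule1 -EFinD subrKC.
Qed.

End TwoPoint.


Lemma alpha_meas (R : realType) (alpha : probability R R) (x1 x2 p : R)
  (p0 : 0 <= p) (p1 : p <= 1) :
  x1 != x2 -> alpha [set x1] = p%:E -> alpha [set x2] = (1 - p)%:E ->
  forall A, measurable A -> alpha A = tpm x1 x2 p0 p1 A.
Proof.
move=> x12 a1 a2 A mA.
rewrite /tpm measure_addE.
change (alpha A = p%:E * \d_x1 A + (1-p)%:E * \d_x2 A)%E.
have m1 : measurable [set x1] by exact: measurable_set1.
have m2 : measurable [set x2] by exact: measurable_set1.
have a1' : alpha [set x1] = p%:E by exact: a1.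
have a2' : alpha [set x2] = (1-p)%:E by exact: a2.
have mS : measurable ([set x1] `|` [set x2]) by exact: measurableU.
have aS : alpha ([set x1] `|` [set x2]) = 1%E.
  rewrite measureU //; last first.
    apply/seteqP; split => y //= [-> /eqP]; by rewrite (negbTE x12).
  change (alpha [set x1] + alpha [set x2] = 1)%E.
  by rewrite a1 a2 -EFinD addrC subrK.
have aC : alpha (~` ([set x1] `|` [set x2])) = 0%E.
  by rewrite probability_setC // aS subee.
have E : alpha A = (alpha ((A `\` [set x1]) `\` [set x2]) +
   alpha ((A `\` [set x1]) `&` [set x2]) + alpha (A `&` [set x1]))%E.
  by rewrite (measureDI alpha mA m1) (measureDI alpha (measurableD mA m1) m2).
have E0 : alpha ((A `\` [set x1]) `\` [set x2]) = 0%E.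
  apply: (@subset_measure0 _ _ _ alpha _ (~` ([set x1] `|` [set x2]))) => //.
  - by apply: measurableD => //; exact: measurableD.
  - exact: measurableC.
  - by move=> y [[Ay /= y1] y2] [|].
rewrite E E0 add0e !diracE.
have [x1A|x1A] := pselect (A x1); have [x2A|x2A] := pselect (A x2).
- rewrite !mem_set // !mule1.
  have -> : A `&` [set x1] = [set x1] by apply/seteqP; split => y /=; [by case=> _ -> | by move=> ->].
  have -> : (A `\` [set x1]) `&` [set x2] = [set x2].
    apply/seteqP; split => y /=; first by case.
    by move=> ->; split => //; split => //= /eqP; rewrite eq_sym (negbTE x12).
  by rewrite a1 a2 addeC.
- rewrite mem_set // memNset // mule1 mule0 adde0.
  have -> : A `&` [set x1] = [set x1] by apply/seteqP; split => y /=; [by case=> _ -> | by move=> ->].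
  have -> : (A `\` [set x1]) `&` [set x2] = set0.
    by apply/seteqP; split => y //= [[Ay _] yx2]; apply: x2A; rewrite -yx2.
  by rewrite measure0 add0e a1.
- rewrite memNset // mem_set // mule1 mule0 add0e.
  have -> : A `&` [set x1] = set0.
    by apply/seteqP; split => y //= [Ay yx1]; apply: x1A; rewrite -yx1.
  have -> : (A `\` [set x1]) `&` [set x2] = [set x2].
    apply/seteqP; split => y /=; first by case.
    by move=> ->; split => //; split => //= /eqP; rewrite eq_sym (negbTE x12).
  by rewrite measure0 adde0 a2.
- rewrite !memNset // !mule0 adde0.
  have -> : A `&` [set x1] = set0.
    by apply/seteqP; split => y //= [Ay yx1]; apply: x1A; rewrite -yx1.
  have -> : (A `\` [set x1]) `&` [set x2] = set0.
    by apply/seteqP; split => y //= [[Ay _] yx2]; apply: x2A; rewrite -yx2.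
  by rewrite measure0 adde0.
Qed.

Lemma alpha_int (R : realType) (alpha : probability R R) (x1 x2 p : R)
  (p0 : 0 <= p) (p1 : p <= 1) (D : set R) (f : R -> \bar R) :
  x1 != x2 -> alpha [set x1] = p%:E -> alpha [set x2] = (1 - p)%:E ->
  measurable D -> D x1 -> D x2 -> measurable_fun D f ->
  (forall x, D x -> (0 <= f x)%E) ->
  (\int[alpha]_(x in D) f x = p%:E * f x1 + (1 - p)%:E * f x2)%E.
Proof.
move=> x12 a1 a2 mD D1 D2 mf f0.
transitivity (\int[tpm x1 x2 p0 p1]_(x in D) f x)%E; last exact: tpm_int.
apply: eq_measure_integral => A mA _; exact: alpha_meas.
Qed.

Lemma reach_iff (R : realType) (lam : nat -> R) i :
  reachable lam i <-> (forall q, (q < i)%N -> 0 < lam q).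
Proof.
split.
  move=> /clos_rt_rtn1_iff h; elim: h => [q //|y z st _ IH q qz].
  move: st; rewrite /step /rate.
  case: eqP => [zy ly|_].
    move: qz; rewrite zy ltnS leq_eqVlt => /orP[/eqP->//|].
    exact: IH.
  case: eqP => [yz _|_]; last by rewrite ltxx.
  by apply: IH; rewrite yz; apply: (ltn_trans qz).
elim: i => [_|i IH H]; first exact: rt_refl.
apply: (rt_trans _ _ _ i); first by apply: IH => q qi; apply: H; apply: ltnW.
apply: rt_step; rewrite /step /rate eqxx; exact: H.
Qed.

Lemma detailed (R : realType) (lam pi : nat -> R) :
  stationary lam pi -> forall j, pi j * lam j = pi j.+1.
Proof.
move=> [p0 [pout [_ bal]]].
have r10 : forall j, rate lam j.+1 j = 1.
  move=> j; rewrite /rate; case: eqP => [h|_]; last by rewrite eqxx.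
  by move: (leqnSn j.+1); rewrite -h ltnn.
elim=> [|j IH].
  have := bal 0%N (rt_refl _ _ _); rewrite /= r10 addr0 add0r mulr1 => ->//.
have [rj|nrj] := pselect (reachable lam j.+1).
  have := bal j.+1 rj; rewrite /= r10 mulr1.
  have -> : rate lam j j.+1 = lam j by rewrite /rate eqxx.
  rewrite IH mulrDr mulr1 => h; apply: (addIr (pi j.+1)); by rewrite h addrC.
rewrite pout // mul0r pout //.
move=> /reach_iff H; apply: nrj; apply/reach_iff => q qj; apply: H.
exact: ltnW.
Qed.

Lemma series_lam (R : realType) (lam pi : nat -> R) :
  stationary lam pi -> series (fun i => pi i * lam i) @ \oo --> 1 - pi 0%N.
Proof.
move=> st; have db := detailed st; move: st => [_ [_ [cs _]]].
have -> : series (fun i => pi i * lam i) = (fun n => series pi n.+1 - pi 0%N).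
  apply/funext; elim=> [|n IH].
    by rewrite /series /= !big_mkord big_ord0 big_ord_recl big_ord0 addr0 subrr.
  rewrite seriesSr IH db [in RHS]seriesSr; by rewrite addrAC.
apply: cvgB; last exact: cvg_cst.
by rewrite -(cvg_shiftS (series pi)) in cs.
Qed.

End Helpers.

Theorem lemmaB2 (R : realType) (lmax : R) (F : R -> R)
  (x1 x2 p eps : R) :
  1 < lmax ->
  (forall x, x \in `[0, lmax] -> derivable F x 1) ->
  {within `[0, lmax]%classic, continuous (derive1 F)} ->
  (forall x, x \in `[0, lmax] -> 0 <= F x) ->
  F 0 = 0 ->
  (forall x, x \in `[0, 1[ -> F x < Fstar lmax F) ->
  0 < derive1 F 1 ->
  x1 \in `]1, lmax] -> x2 \in `[0, 1[ -> p \in `]0, 1[ ->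
  (exists alpha : probability R R,
     alpha [set x1] = p%:E /\ alpha [set x2] = (1 - p)%:E /\
     optimal lmax F alpha) ->
  0 < eps ->
  forall (lam pi : nat -> R),
    policy lmax lam -> stable lam -> stationary lam pi ->
    regret lmax F lam pi <= eps ->
    series (fun i => pi i * lam i) @ \oo --> 1 - pi 0%N /\
    1 - (x1 - x2) / (F x1 - F x2) * eps <= 1 - pi 0%N.
Proof.
move=> hl1 hder _ hF0 _ hFlt _ hx1 hx2 hp [alpha [a1 [a2 [[ha1 ha2] aopt]]]]
  heps lam pi hpol _ hst hreg.
split; first exact: series_lam.
move: hx1 hx2 hp; rewrite !in_itv /= => /andP[x1g x1l] /andP[x20 x2l] /andP[p0 p1].
have I0P : forall x, I0 lmax x <-> 0 <= x <= lmax.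
  by move=> x; rewrite /I0 /= in_itv.
have I1 : I0 lmax x1 by apply/I0P; rewrite x1l andbT; lra.
have I2 : I0 lmax x2 by apply/I0P; rewrite x20 /=; lra.
have mI : measurable (I0 lmax) by exact: measurable_itv.
have cF : {within I0 lmax, continuous F}.
  by apply: derivable_within_continuous => x hx; exact: hder.
have mF : measurable_fun (I0 lmax) F.
  exact: subspace_continuous_measurable_fun.
have mFE : measurable_fun (I0 lmax) (fun x => (F x)%:E) by exact/measurable_EFinP.
have mXE : measurable_fun (I0 lmax) (fun x : R => x%:E).
  by apply/measurable_EFinP; exact: measurable_id.
have F0 : forall x, I0 lmax x -> 0 <= F x by move=> x /I0P hx; apply: hF0; rewrite in_itv.
have x12 : x1 != x2 by apply/eqP => e; lra.
have p0' : 0 <= p by lra.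
have p1' : p <= 1 by lra.
set S := [set r : R | exists alpha : probability R R,
         feasible lmax alpha /\
         (\int[alpha]_(x in I0 lmax) (F x)%:E)%E = r%:E].
have FsE : Fstar lmax F = sup S by [].
have hsup : has_sup S.
  apply: contrapT => ns; have := hFlt x2; rewrite in_itv /= x20 x2l FsE sup_out //.
  by move=> /(_ isT); have := F0 _ I2; lra.
have tp : forall a b s, I0 lmax a -> I0 lmax b -> 0 <= s -> s <= 1 ->
    s * a + (1 - s) * b <= 1 -> s * F a + (1 - s) * F b <= Fstar lmax F.
  move=> a b s Ia Ib s0 s1 hm; rewrite FsE; apply: (sup_upper_bound hsup).
  exists (tpm a b s0 s1); split; [split|].
  - exact: tpm_D1.
  - rewrite tpm_int //; last by move=> x /I0P hx; rewrite lee_fin; lra.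
  - rewrite tpm_int //; try (by move=> x /F0; rewrite lee_fin).

have FS : Fstar lmax F = p * F x1 + (1 - p) * F x2.
  move: aopt; rewrite (alpha_int p0' p1' x12 a1 a2 mI I1 I2 mFE); last first.
    by move=> x hx; rewrite lee_fin; exact: F0.
  by rewrite -!EFinM -EFinD => h; apply: EFin_inj; rewrite -h.
have mX : p * x1 + (1 - p) * x2 <= 1.
  move: ha2; rewrite (alpha_int p0' p1' x12 a1 a2 mI I1 I2 mXE); last first.
    by move=> x /I0P hx; rewrite lee_fin; lra.
  by rewrite -!EFinM -EFinD lee_fin.
have F2lt : F x2 < Fstar lmax F by apply: hFlt; rewrite in_itv /= x20 x2l.
have dF : F x2 < F x1 by nra.
have m1 : p * x1 + (1 - p) * x2 = 1.
  apply/eqP; rewrite eq_le mX /= leNgt; apply/negP => hm.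
  have dx : 0 < x1 - x2 by lra.
  set t := Num.min (1 - p) ((1 - (p * x1 + (1 - p) * x2)) / (x1 - x2)).
  have t0 : 0 < t by rewrite lt_min subr_gt0 p1 /= divr_gt0 // subr_gt0.
  have t1 : t <= 1 - p by rewrite ge_min lexx.
  have t2 : t * (x1 - x2) <= 1 - (p * x1 + (1 - p) * x2).
    by rewrite -ler_pdivlMr // ge_min lexx orbT.
  have := tp x1 x2 (p + t) I1 I2 ltac:(lra) ltac:(lra) ltac:(lra).
  have dF1 : 0 < F x1 - F x2 by rewrite subr_gt0.
  have := mulr_gt0 t0 dF1; rewrite FS; lra.
have dx : 0 < x1 - x2 by lra.
set mu := (F x1 - F x2) / (x1 - x2).
have hmu : mu * (x1 - x2) = F x1 - F x2 by rewrite /mu divfK // subr_eq0.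
have mupos : 0 < mu by rewrite /mu divr_gt0 // subr_gt0.
have FsL : Fstar lmax F = F x2 + mu * (1 - x2).
  have e : p * (x1 - x2) = 1 - x2 by lra.
  rewrite FS -e mulrCA hmu; ring.
have Fx1L : F x1 = F x2 + mu * (x1 - x2) by rewrite hmu; ring.
have FL : forall x, I0 lmax x -> F x <= F x2 + mu * (x - x2).
  move=> x Ix; rewrite leNgt; apply/negP => hlt.
  have /I0P /andP[x0 xl] := Ix.
  have h0 : 0 < F x - (F x2 + mu * (x - x2)) by rewrite subr_gt0.
  case: (lerP x 1) => hx.
  - have dx' : 0 < x1 - x by lra.
    set s := (x1 - 1) / (x1 - x).
    have es : s * (x1 - x) = x1 - 1 by rewrite /s divfK // gt_eqF.
    have s0 : 0 < s by rewrite /s divr_gt0 // subr_gt0.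
    have s1 : s <= 1 by rewrite /s ler_pdivrMr // mul1r; lra.
    have e3 : mu * (s * (x1 - x)) = mu * (x1 - 1) by rewrite es.
    have := tp x x1 s Ix I1 (ltW s0) s1 ltac:(lra).
    have := mulr_gt0 s0 h0; rewrite FsL Fx1L; lra.
  - have dx' : 0 < x - x2 by lra.
    set s := (1 - x2) / (x - x2).
    have es : s * (x - x2) = 1 - x2 by rewrite /s divfK // gt_eqF.
    have s0 : 0 < s by rewrite /s divr_gt0 // subr_gt0.
    have s1 : s <= 1 by rewrite /s ler_pdivrMr // mul1r; lra.
    have e3 : mu * (s * (x - x2)) = mu * (1 - x2) by rewrite es.
    have := tp x x2 s Ix I2 (ltW s0) s1 ltac:(lra).
    have := mulr_gt0 s0 h0; rewrite FsL; lra.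
have pi0 : forall i, 0 <= pi i by case: hst.
have lamI : forall i, I0 lmax (lam i) by move=> i; apply/I0P; exact: hpol.
set u := fun i => pi i * F (lam i).
set v := fun i => pi i * (F x2 + mu * (lam i - x2)).
have u0 : forall i, 0 <= u i by move=> i; rewrite /u mulr_ge0 // F0.
have uv : forall i, u i <= v i by move=> i; rewrite /u /v ler_wpM2l // FL.
set A := (F x2 - mu * x2) * 1 + mu * (1 - pi 0%N).
have sv : series v = (fun n => (F x2 - mu * x2) * series pi n +
                               mu * series (fun i => pi i * lam i) n).
  apply/funext; elim=> [|n IH].
    by rewrite /series /= !big_mkord !big_ord0 !mulr0 addr0.
  by rewrite !seriesSr IH /v; ring.
have cv : series v @ \oo --> A.
  have cpi : series pi @ \oo --> (1 : R) by case: hst => _ [_ []].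
  rewrite sv; apply: cvgD; [exact: cvgMr cpi | exact: cvgMr (series_lam hst)].
have vA : forall n, series v n <= A.
  move=> n; rewrite -(cvg_lim _ cv) //; apply: nondecreasing_cvgn_le.
    apply/nondecreasing_seqP => k; rewrite seriesSr lerDl.
    exact: (le_trans (u0 k) (uv k)).
  by apply/cvg_ex; exists A.
have su : forall n, series u n <= A.
  by move=> n; apply: le_trans (vA n); apply: ler_sum => i _; exact: uv.
have cu : cvgn (series u).
  apply: nondecreasing_is_cvgn; first by apply/nondecreasing_seqP => k; rewrite seriesSr lerDl.
  by exists A => _ [n _ <-].
have EA : Epi lam pi F <= A by rewrite /Epi; apply: limr_le => //; apply: nearW.
have key : mu * pi 0%N <= eps.
  move: hreg; rewrite /regret FsL; move: EA; rewrite /A; lra.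
rewrite lerD2l lerN2 -invf_div ler_pdivlMl //.

Qed.
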